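(* Let $H_m,H_{el}$ be finite groups with an action $(h,g)\mapsto h\cdot g$ of $H_{el}$ on $H_m$ satisfying $h\cdot(gg')=(h\cdot g)(h\cdot g')$, and let $\mathcal{A}=F(H_m)\times\mathbb{C}H_{el}$ be the modified quantum double, with elements written as functions in $F(H_m\times H_{el})$. Let $A\subset H_m$ be an $H_{el}$-orbit with preferred element $g_A$, $N_A=\{h\in H_{el}:h\cdot g_A=g_A\}$, and $\Pi^A_1$ the magnetic irreducible representation (trivial representation of $N_A$). Let $E\subseteq A$ and consider the condensate $|\phi_r\rangle=\sum_{g_i\in E}|g_i\rangle$, which as a function on $H_{el}$ is $|\phi_r(x)\rangle=1_{V_E}(x)$ with $V_E=\{x\in H_{el}:x\cdot g_A\in E\}$. Let $M_E=\{m\in H_{el}: mV_E=V_E\}=\{m\in H_{el}:\{m\cdot g_i\}_{g_i\in E}=E\}$ and let $K$ be the smallest subgroup of $H_m$ containing $E$. Then $\mathcal{T}_r:=\{a\in\mathcal{A}:(\mathrm{id}\otimes\Pi^A_1)\Delta(a)(1\otimes|\phi_r\rangle)=a\otimes|\phi_r\rangle\}$ equals $F(H_m/K)\otimes\mathbb{C}M_E$; that is, $f\in\mathcal{T}_r$ if and only if $f(x_1,y_1)=0$ whenever $y_1\notin M_E$, and $f(x_1k,y_1)=f(x_1,y_1)$ for all $x_1\in H_m$, $y_1\in H_{el}$, $k\in K$.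
   Context: Modified quantum double: vector space $F(H_m)\otimes\mathbb{C}H_{el}$ with basis $P_gh$, identified with $F(H_m\times H_{el})$ via $P_gh\leftrightarrow\delta_g\otimes\delta_h$; $P_ghP_{g'}h'=\delta_{g,h\cdot g'}P_ghh'$, $\Delta(P_gh)=\sum_{g'\in H_m}P_{g'}h\otimes P_{g'^{-1}g}h$ (in function notation $\Delta(f)(x_1,y_1;x_2,y_2)=f(x_1x_2,y_1)\delta_{y_1}(y_2)$), $\varepsilon(P_gh)=\delta_{g,e}$, $S(P_gh)=P_{h^{-1}\cdot g^{-1}}h^{-1}$. The carrier space of $\Pi^A_1$ is $\{\phi:H_{el}\to\mathbb{C}\mid \phi(xn)=\phi(x)\ \forall n\in N_A\}$, with action $(\Pi^A_1(f)\phi)(x)=\sum_{z\in H_{el}}f(x\cdot g_A,z)\phi(z^{-1}x)$; the basis vector $|g\rangle$ ($g\in A$) is the indicator function of $\{x\in H_{el}:x\cdot g_A=g\}$. $F(H_m/K)$ denotes functions on $H_m$ constant on left cosets $gK$. *)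

(* Defs.v *)
From mathcomp Require Import all_boot all_order all_algebra all_fingroup all_field.
Set Implicit Arguments. Unset Strict Implicit. Unset Printing Implicit Defensive.
Import GRing.Theory Num.Theory.
Local Open Scope ring_scope.

Section ModifiedQD.
Variables (gM gE : finGroupType).
Variable act : gE -> gM -> gM.

(* Elements of the modified quantum double A = F(H_m) (x) C H_el, written
   as functions on H_m x H_el:  P_g h <-> delta_g (x) delta_h. *)
Definition qd_elt := gM -> gE -> algC.

Definition qd_Delta (f : qd_elt) (x1 : gM) (y1 : gE) (x2 : gM) (y2 : gE) : algC :=
  f (x1 * x2)%g y1 * (y1 == y2)%:R.

Variable gA : gM.

Definition N_A : {set gE} := [set h | act h gA == gA].

Definition carrier_Pi1 (phi : gE -> algC) : Prop :=
  forall x n, n \in N_A -> phi (x * n)%g = phi x.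

Definition Pi1 (f : qd_elt) (phi : gE -> algC) : gE -> algC :=
  fun x => \sum_(z : gE) f (act x gA) z * phi (z^-1 * x)%g.

Definition ket (g : gM) : gE -> algC := fun x => (act x gA == g)%:R.

(* Elements of A (x) V are functions (x1,y1,x) |-> value.
   (id (x) Pi^A_1) Delta(f) applied to (1 (x) phi). *)
Definition idPi1_Delta (f : qd_elt) (phi : gE -> algC) : gM -> gE -> gE -> algC :=
  fun x1 y1 x => Pi1 (qd_Delta f x1 y1) phi x.

Definition tens (f : qd_elt) (phi : gE -> algC) : gM -> gE -> gE -> algC :=
  fun x1 y1 x => f x1 y1 * phi x.

Variable E : {set gM}.

Definition phi_r : gE -> algC := fun x => \sum_(g in E) ket g x.

Definition in_Tr (f : qd_elt) : Prop :=
  forall x1 y1 x, idPi1_Delta f phi_r x1 y1 x = tens f phi_r x1 y1 x.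

Definition V_E : {set gE} := [set x | act x gA \in E].

Definition M_E : {set gE} := [set m | [set (m * x)%g | x in V_E] == V_E].

End ModifiedQD.

(* Main.v *)
Require Import Defs.
From mathcomp Require Import all_boot all_order all_algebra all_fingroup all_field.
Import GRing.Theory Num.Theory.
Local Open Scope ring_scope.

Lemma phi_rE {gM gE : finGroupType} (act : gE -> gM -> gM) gA E x :
  phi_r act gA E x = (x \in V_E act gA E)%:R.
Proof.
rewrite /phi_r /ket inE.
case: (boolP (act x gA \in E)) => H.
  rewrite (bigD1 (act x gA)) //= eqxx big1 ?addr0 // => g /andP[_ /negbTE].
  by rewrite eq_sym => ->.
by rewrite big1 // => g gin; case: eqP => // e; rewrite e gin in H.
Qed.

Lemma Tr_iff {gM gE : finGroupType} (act : gE -> gM -> gM) gA E f :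
  in_Tr act gA E f <-> forall x1 y1 x,
    f (x1 * act x gA)%g y1 * ((y1^-1 * x)%g \in V_E act gA E)%:R
    = f x1 y1 * (x \in V_E act gA E)%:R.
Proof.
have e : forall x1 y1 x, idPi1_Delta act gA f (phi_r act gA E) x1 y1 x =
   f (x1 * act x gA)%g y1 * ((y1^-1 * x)%g \in V_E act gA E)%:R.
  move=> x1 y1 x; rewrite /idPi1_Delta /Pi1 /qd_Delta.
  rewrite (bigD1 y1) //= eqxx mulr1 big1 ?addr0 ?phi_rE // => z /negbTE.
  by rewrite eq_sym => ->; rewrite mulr0 mul0r.
rewrite /in_Tr /tens; split => H x1 y1 x; move: (H x1 y1 x);
  by rewrite e phi_rE.
Qed.

Theorem mainTheorem7 (gM gE : finGroupType) (act : gE -> gM -> gM)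
  (act1 : forall g : gM, act 1%g g = g)
  (actM : forall (h h' : gE) (g : gM), act (h * h')%g g = act h (act h' g))
  (act_morph : forall (h : gE) (g g' : gM), act h (g * g')%g = (act h g * act h g')%g)
  (gA : gM) (E : {set gM})
  (hE : E \subset [set act h gA | h : gE]) :
  forall f : qd_elt gM gE,
    in_Tr act gA E f <->
    ((forall (x1 : gM) (y1 : gE), y1 \notin M_E act gA E -> f x1 y1 = 0) /\
     (forall (x1 : gM) (y1 : gE) (k : gM), k \in <<E>>%g -> f (x1 * k)%g y1 = f x1 y1)).
Proof.
move=> f; have T := Tr_iff act gA E f. apply: (iff_trans T).
set V := V_E act gA E.
have ME : forall y, (y \in M_E act gA E) = ((y *: V)%g == V).
  by move=> y; rewrite /M_E in_set -lcosetE.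
have inM : forall y x, y \in M_E act gA E -> ((y^-1 * x)%g \in V) = (x \in V).
  move=> y x; rewrite ME => /eqP e.
  by rewrite -mem_lcoset e.
have notM : forall y, y \notin M_E act gA E -> exists2 x, x \in V & (y^-1 * x)%g \notin V.
  move=> y; rewrite ME eq_sym eqEcard card_lcoset leqnn andbT => /subsetPn [x Hx Hn].
  by rewrite mem_lcoset in Hn; exists x.
split.
- move=> H.
  have H1 : forall x1 y1, y1 \notin M_E act gA E -> f x1 y1 = 0.
    move=> x1 y1 /notM [x Hx Hn]; move: (H x1 y1 x).
    by rewrite Hx (negbTE Hn) mulr0 mulr1.
  split => // x1 y1 k.
  case: (boolP (y1 \in M_E act gA E)) => My; last first.
    by rewrite !H1.
  have gen : forall x g, g \in E -> f (x * g)%g y1 = f x y1.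
    move=> x g gin; move/subsetP: hE => /(_ g gin) /imsetP [h _ eh].
    have hV : h \in V by rewrite inE -eh.
    move: (H x y1 h); rewrite inM // hV mulr1 -eh.
    by rewrite mulr1.
  case/gen_prodgP => n [c Hc ->]; elim: n c Hc => [|n IH] c Hc.
    by rewrite big_ord0 mulg1.
  rewrite big_ord_recr /= mulgA gen //.
  by apply: IH => i; apply: Hc.
- move=> [H1 H2] x1 y1 x.
  case: (boolP (y1 \in M_E act gA E)) => My; last first.
    by rewrite !H1 // !mul0r.
  rewrite inM //; case: (boolP (x \in V)) => Hx; last by rewrite !mulr0.
  rewrite H2 //; apply: mem_gen; by rewrite inE in Hx.
Qed.
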